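(* In the setting of the context, the following two conditions are equivalent: (MC1) for every continuous path $c:[0,\epsilon)\to G$ with $c(0)=e$, the path $t\mapsto \Xi(J_0\cdot c(t))$ in $K$ is constant equal to $J_0$; (MC2) up to shrinking $W$, for $g\in W$, $J_0\cdot g\in K$ implies $J_0\cdot g=J_0$.
   Context: $X$ is a compact connected smooth manifold, $\mathcal E$ a Banach manifold, $\mathcal I\subset\mathcal E$ a closed subset, $G$ a topological group with countable topology acting continuously on the right on $\mathcal E$ by smooth transformations preserving $\mathcal I$, $J_0\in\mathcal I$, $e$ the identity of $G$. There are a Banach space $T$, a homeomorphism $\phi:V\to W$ from a connected open neighbourhood $V$ of $0\in T$ onto a connected open neighbourhood $W$ of $e$, and a connected open neighbourhood $U$ of $J_0$ such that $(\xi,J)\mapsto J\cdot\phi(\xi)$ is smooth on $V\times U$, with differential $L$ at $(0,J_0)$; $\mathfrak e=\{\xi: L(\xi,0)=0\}$. Assume $\mathfrak e$ has a closed complement $\mathfrak e^\perp$ in $T$, $L(\xi,\omega)=\omega+P\xi$ with $P:T\to T_{J_0}\mathcal E$ bounded linear, and $\operatorname{Im}P$ is closed with closed complement $F^\perp$. Let $\tilde K\subset U$ be a submanifold through $J_0$ tangent to $F^\perp$, $K=\tilde K\cap\mathcal I$, and (after shrinking) let $\Phi(\xi,J)=J\cdot\phi(\xi)$ be an isomorphism from $(\mathfrak e^\perp\cap V)\times K$ onto $U\cap\mathcal I$. The retraction $\Xi:U\cap\mathcal I\to K$ is the second component of $\Phi^{-1}$. *)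

(* Defs.v *)
From HB Require Import structures.
From mathcomp Require Import all_boot all_order all_algebra.
From mathcomp Require Import all_classical all_reals all_analysis.
Set Implicit Arguments. Unset Strict Implicit. Unset Printing Implicit Defensive.
Import Order.TTheory GRing.Theory Num.Theory.
Import numFieldNormedType.Exports.
Local Open Scope classical_set_scope.
Local Open Scope ring_scope.

Definition topological_group (G : topologicalType)
  (mul : G -> G -> G) (inv : G -> G) (e : G) : Prop :=
  [/\ (forall x y z, mul x (mul y z) = mul (mul x y) z),
      (forall x, mul e x = x /\ mul x e = x),
      (forall x, mul (inv x) x = e /\ mul x (inv x) = e),
      continuous (fun p : G * G => mul p.1 p.2)
    & continuous inv].

Definition continuous_right_action (G E : topologicalType)
  (mul : G -> G -> G) (e : G) (act : E -> G -> E) : Prop :=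
  [/\ (forall J, act J e = J),
      (forall J g h, act (act J g) h = act J (mul g h))
    & continuous (fun p : E * G => act p.1 p.2)].

Definition linear_subspace (R : realType) (T : normedModType R) (S : set T) :=
  [/\ S 0, (forall x y, S x -> S y -> S (x + y))
    & (forall (a : R) x, S x -> S (a *: x))].

(* Condition (MC1): for every continuous path c : [0,eps) -> G with c 0 = e,
   the path t |-> Xi (J0 . c t) is (as a germ at t = 0, i.e. on some [0,delta))
   defined (J0 . c t lies in U /\ I) and constantly equal to J0. *)
Definition MC1 (R : realType) (G E : topologicalType) (e : G)
  (act : E -> G -> E) (UI : set E) (Xi : E -> E) (J0 : E) : Prop :=
  forall (eps : R) (c : R -> G), 0 < eps -> c 0 = e ->
    {within `[0, eps[, continuous c} ->
    exists2 delta : R, 0 < delta /\ delta <= eps &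
      forall t, 0 <= t < delta -> UI (act J0 (c t)) /\ Xi (act J0 (c t)) = J0.

Definition MC2 (G E : topologicalType) (e : G) (act : E -> G -> E)
  (W : set G) (K : set E) (J0 : E) : Prop :=
  exists W' : set G, [/\ open W', W' e, W' `<=` W &
    forall g, W' g -> K (act J0 g) -> act J0 g = J0].

(* Main.v *)
Require Import Defs.
From HB Require Import structures.
From mathcomp Require Import all_boot all_order all_algebra.
From mathcomp Require Import all_classical all_reals all_analysis.
Import Order.TTheory GRing.Theory Num.Theory.
Import numFieldNormedType.Exports.
Local Open Scope classical_set_scope.
Local Open Scope ring_scope.
From mathcomp Require Import ring lra.

Definition tentf {R : realType} (s : R) : R := 1 - 2 * `|s - 1|.
Definition bump {R : realType} (s : R) : R := (tentf s + `|tentf s|) / 2.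

Lemma bump_cases {R : realType} (s : R) :
  (0 <= tentf s /\ bump s = tentf s) \/ (tentf s <= 0 /\ bump s = 0).
Proof.
rewrite /bump; have [h|h] := leP 0 (tentf s).
  by left; split => //; rewrite ger0_norm //; field.
by right; split; [exact: ltW|rewrite ltr0_norm // subrr mul0r].
Qed.

Lemma bump_ge0 {R : realType} (s : R) : 0 <= bump s.
Proof. by case: (bump_cases s) => -[h ->]. Qed.

Lemma bump_le1 {R : realType} (s : R) : bump s <= 1.
Proof.
case: (bump_cases s) => -[h ->] //.
by rewrite /tentf gerBl mulr_ge0.
Qed.

Lemma bump_small {R : realType} (s : R) : s <= 2^-1 -> bump s = 0.
Proof.
move=> hs; case: (bump_cases s) => -[h ->] //; apply/eqP; rewrite eq_le h /=.
move: h; rewrite /tentf ler0_norm ?subr_le0; last by apply: le_trans hs _; lra.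
lra.
Qed.

Lemma bump_big {R : realType} (s : R) : 3 / 2 <= s -> bump s = 0.
Proof.
move=> hs; case: (bump_cases s) => -[h ->] //; apply/eqP; rewrite eq_le h /=.
move: h; rewrite /tentf ger0_norm ?subr_ge0; last by apply: le_trans hs; lra.
lra.
Qed.

Lemma bump_pos {R : realType} (s : R) : bump s != 0 -> 2^-1 < s.
Proof. by apply: contra_neqT; rewrite -leNgt => /bump_small ->. Qed.

Lemma bump1 {R : realType} : bump (1 : R) = 1.
Proof. by rewrite /bump /tentf subrr normr0 mulr0 subr0 normr1; field. Qed.

Lemma bump_cont {R : realType} : continuous (@bump R).
Proof.
move=> s; rewrite /bump.
have h1 : (fun x : R => x - 1) @ s --> s - 1.
  exact: (cvgB cvg_id (cvg_cst (1:R))).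
have ht : tentf @ s --> tentf s.
  exact: (cvgB (cvg_cst (1:R)) (cvgMr (a := 2:R) (cvg_norm h1))).
exact: (cvgMl (b := 2^-1 : R) (cvgD ht (cvg_norm ht))).
Qed.

Definition Nt {R : realType} (t : R) : nat := (Num.truncn (2 / t)).+1.
Definition term {R : realType} {T : normedModType R} (x : nat -> T) n (t : R) : T :=
  bump (2^+n * t) *: x n.
Definition gam {R : realType} {T : normedModType R} (x : nat -> T) (t : R) : T :=
  \sum_(0 <= n < Nt t) term x n t.

Lemma pow2_gt_nat {R : realType} n : (n%:R : R) < 2^+n.
Proof.
have := ltn_expl n (isT : (1 < 2)%N); rewrite -(ltr_nat R) natrX.
exact.
Qed.

Lemma term_zero {R : realType} {T : normedModType R} (x : nat -> T) t n :
  (Nt t <= n)%N -> term x n t = 0.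
Proof.
move=> hn; rewrite /term.
have [t0|t0] := leP t 0.
  rewrite bump_small ?scale0r //.
  apply: le_trans (_ : 0 <= _); last by lra.
  by rewrite mulr_ge0_le0 // exprn_ge0.
rewrite bump_big ?scale0r //.
have h1 : 2 / t < (Nt t)%:R by exact: truncnS_gt.
have h2 : ((Nt t)%:R : R) <= n%:R by rewrite ler_nat.
have h3 := pow2_gt_nat (R := R) n.
have h4 : 2 / t < 2^+n by apply: lt_trans h1 _; apply: le_lt_trans h2 h3.
move: h4; rewrite ltr_pdivrMr // => h4.
apply: le_trans (ltW h4); lra.
Qed.

Lemma gam_widen {R : realType} {T : normedModType R} (x : nat -> T) t M :
  (Nt t <= M)%N -> gam x t = \sum_(0 <= n < M) term x n t.
Proof.
move=> hM; rewrite /gam (big_cat_nat (leq0n (Nt t)) hM) /=.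
rewrite [X in _ = _ + X](_ : _ = 0) ?addr0 //.
rewrite big_nat_cond big1 // => i /andP [/andP [hi _] _].
exact: term_zero.
Qed.

Lemma term_cont {R : realType} {T : normedModType R} (x : nat -> T) n :
  continuous (term x n).
Proof.
move=> t; rewrite /term.
have h1 : (fun s : R => 2^+n * s) @ t --> 2^+n * t.
  exact: (cvgMr (a := 2^+n : R) cvg_id).
have h2 : (fun s : R => bump (2^+n * s)) @ t --> bump (2^+n * t).
  exact: (cvg_comp _ _ h1 (bump_cont _)).
exact: (cvgZ h2 (cvg_cst (x n))).
Qed.

Lemma sum_cont {R : realType} {T : normedModType R} (x : nat -> T) M :
  continuous (fun t => \sum_(0 <= n < M) term x n t).
Proof.
elim: M => [|M IH] t.
  rewrite /continuous_at big_geq //.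
  have -> : (fun t => \sum_(0 <= n < 0) term x n t) = fun=> 0.
    by apply: funext => s; rewrite big_geq.
  exact: cvg_cst.
rewrite /continuous_at.
under eq_fun do rewrite big_nat_recr //=.
rewrite big_nat_recr //=.
exact: (cvgD (IH t) (term_cont x M t)).
Qed.

Lemma geom_le2 {R : realType} M : \sum_(0 <= n < M) ((2:R)^-1)^+n <= 2.
Proof.
suff -> : \sum_(0 <= n < M) ((2:R)^-1)^+n = 2 - 2 * (2^-1)^+M.
  by rewrite gerBl mulr_ge0 // exprn_ge0.
elim: M => [|M IH]; first by rewrite big_geq // expr0; lra.
rewrite big_nat_recr //= IH exprS.
set a := (2^-1)^+M; lra.
Qed.

Lemma pow_half_lt {R : realType} n (t : R) : 2^-1 < 2^+n * t -> (2^-1)^+n < 2 * t.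
Proof.
move=> h.
have hp : (0 : R) < (2^-1)^+n by rewrite exprn_gt0.
have e1 : (2^-1)^+n * (2^+n) = 1 :> R by rewrite -exprMn mulVf ?expr1n.
have := ltr_pM2l hp; move=> /(_ (2^-1) (2^+n * t)); rewrite h mulrA e1 mul1r => /esym h2.
lra.
Qed.

Lemma term_norm1 {R : realType} {T : normedModType R} (x : nat -> T) (rho : R)
  (hx : forall n, `|x n| <= rho * ((2^-1)^+n)^+2) n t :
  `|term x n t| <= rho * (2^-1)^+n.
Proof.
rewrite /term normrZ ger0_norm ?bump_ge0 //.
have h0 : 0 <= `|x n| by [].
have hh : (0:R) <= (2^-1)^+n by rewrite exprn_ge0.
have hh1 : ((2:R)^-1)^+n <= 1 by apply: exprn_ile1; lra.
have hrho : 0 <= rho.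
  have := le_trans h0 (hx n); rewrite pmulr_lge0 // exprn_gt0 // exprn_gt0 //.
have b1 := bump_le1 (2^+n * t); have b0 := bump_ge0 (2^+n * t).
apply: le_trans (ler_wpM2l b0 (hx n)) _.
rewrite expr2.
set h := (2^-1)^+n in hh hh1 *.
set b := bump _ in b1 b0 *.
have : b * (rho * h) <= 1 * (rho * h) by apply: ler_wpM2r => //; rewrite mulr_ge0.
have : rho * (h * h) <= rho * h by apply: ler_wpM2l => //; rewrite ler_piMr.
nra.
Qed.

Lemma term_norm2 {R : realType} {T : normedModType R} (x : nat -> T) (rho : R)
  (hx : forall n, `|x n| <= rho * ((2^-1)^+n)^+2) n t :
  `|term x n t| <= 2 * rho * `|t| * (2^-1)^+n.
Proof.
have h0 : 0 <= `|x n| by [].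
have hh : (0:R) <= (2^-1)^+n by rewrite exprn_ge0.
have hrho : 0 <= rho.
  have := le_trans h0 (hx n); rewrite pmulr_lge0 // exprn_gt0 // exprn_gt0 //.
rewrite /term normrZ ger0_norm ?bump_ge0 //.
have [b0|bn0] := eqVneq (bump (2^+n * t)) 0.
  by rewrite b0 mul0r !mulr_ge0.
have hlt := @pow_half_lt _ n t (@bump_pos _ _ bn0).
have tpos : 0 < t.
  have hp : (0:R) < (2^-1)^+n by rewrite exprn_gt0.
  move: hlt hp; set p := (2^-1)^+n; lra.
rewrite (ger0_norm (ltW tpos)).
have b1 := bump_le1 (2^+n * t); have b0 := bump_ge0 (2^+n * t).
apply: le_trans (ler_wpM2l b0 (hx n)) _.
rewrite expr2.
set h := (2^-1)^+n in hh hlt *.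
set b := bump _ in b1 b0 *.
have : b * (rho * (h * h)) <= 1 * (rho * (h * h)) by apply: ler_wpM2r => //; rewrite !mulr_ge0.
have : rho * (h * h) <= rho * ((2 * t) * h).
  by apply: ler_wpM2l => //; apply: ler_wpM2r => //; apply: ltW.
nra.
Qed.

Lemma gam_norm1 {R : realType} {T : normedModType R} (x : nat -> T) (rho : R)
  (hrho : 0 <= rho)
  (hx : forall n, `|x n| <= rho * ((2^-1)^+n)^+2) t :
  `|gam x t| <= 2 * rho.
Proof.
apply: le_trans (ler_norm_sum _ _ _) _.
apply: le_trans (_ : \sum_(0 <= n < Nt t) rho * (2^-1)^+n <= _).
  by apply: ler_sum => n _; apply: term_norm1.
rewrite -mulr_sumr mulrC; apply: ler_wpM2r => //; exact: geom_le2.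
Qed.

Lemma gam_norm2 {R : realType} {T : normedModType R} (x : nat -> T) (rho : R)
  (hrho : 0 <= rho)
  (hx : forall n, `|x n| <= rho * ((2^-1)^+n)^+2) t :
  `|gam x t| <= 4 * rho * `|t|.
Proof.
apply: le_trans (ler_norm_sum _ _ _) _.
apply: le_trans (_ : \sum_(0 <= n < Nt t) 2 * rho * `|t| * (2^-1)^+n <= _).
  by apply: ler_sum => n _; apply: term_norm2.
rewrite -mulr_sumr.
have := geom_le2 (R := R) (Nt t).
have : 0 <= 2 * rho * `|t| by rewrite !mulr_ge0.
set s := \sum_(_ <= _ < _) _; set a := 2 * rho * `|t|.
have -> : 4 * rho * `|t| = 2 * a by rewrite /a; ring.
nra.
Qed.

Lemma gam0 {R : realType} {T : normedModType R} (x : nat -> T) (rho : R)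
  (hrho : 0 <= rho)
  (hx : forall n, `|x n| <= rho * ((2^-1)^+n)^+2) : gam x 0 = 0.
Proof.
apply/eqP; rewrite -normr_le0.
by have := @gam_norm2 _ _ x rho hrho hx 0; rewrite normr0 mulr0.
Qed.

Lemma gam_cont {R : realType} {T : normedModType R} (x : nat -> T) (rho : R)
  (hrho : 0 <= rho)
  (hx : forall n, `|x n| <= rho * ((2^-1)^+n)^+2) t0 :
  0 <= t0 -> {for t0, continuous (gam x)}.
Proof.
rewrite le_eqVlt => /orP [/eqP <-|t0p].
  rewrite /prop_for /continuous_at (@gam0 _ _ x rho hrho hx).
  apply/cvgrPdist_lt => eps eps0.
  have hc : (fun t : R => 4 * rho * `|t|) @ (0:R) --> (0:R).
    have := cvgMr (a := 4 * rho) (cvg_norm (@cvg_id _ (nbhs (0:R)))).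
    rewrite normr0 mulr0; exact.
  move/cvgrPdist_lt: hc => /(_ eps eps0).
  apply: filterS => t; rewrite sub0r normrN sub0r normrN => h.
  apply: le_lt_trans (@gam_norm2 _ _ x rho hrho hx t) _.
  by apply: le_lt_trans (ler_norm _) h.
set M := Nt (t0 / 2).
have hnear : {near t0, (fun t => \sum_(0 <= n < M) term x n t) =1 gam x}.
  have : \forall t \near t0, t0 / 2 < t by apply: lt_nbhsr; lra.
  apply: filterS => t ht /=.
  rewrite (@gam_widen _ _ x t M) //.
  rewrite /M /Nt ltnS; apply: le_truncn.
  have t0h : 0 < t0 / 2 by lra.
  have tp : 0 < t by lra.
  rewrite ler_pdivrMr // mulrAC ler_pdivlMr //; lra.
have e0 : gam x t0 = \sum_(0 <= n < M) term x n t0.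
  rewrite (@gam_widen _ _ x t0 M) //.
  rewrite /M /Nt ltnS; apply: le_truncn.
  have t0h : 0 < t0 / 2 by lra.
  rewrite ler_pdivrMr // mulrAC ler_pdivlMr //; lra.
rewrite /prop_for /continuous_at e0.
exact: cvg_trans (near_eq_cvg hnear) (sum_cont x M t0).
Qed.

Lemma pow_mul_lt {R : realType} m n : (m < n)%N -> (2:R)^+m * (2^-1)^+n <= 2^-1.
Proof.
move=> hmn; rewrite -(subnKC (ltnW hmn)) exprD mulrA -exprMn mulfV // expr1n mul1r.
rewrite -subnSK // exprS; set k := (n - m.+1)%N.
have : ((2:R)^-1)^+k <= 1 by apply: exprn_ile1; lra.
have : (0:R) <= (2^-1)^+k by rewrite exprn_ge0.
set a := _ ^+ k; nra.
Qed.

Lemma pow_mul_gt {R : realType} m n : (n < m)%N -> 3 / 2 <= (2:R)^+m * (2^-1)^+n.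
Proof.
move=> hmn; rewrite -(subnKC (ltnW hmn)) exprD mulrAC -exprMn mulfV // expr1n mul1r.
rewrite -subnSK // exprS; set k := (m - n.+1)%N.
have : (1:R) <= 2^+k by apply: exprn_ege1; lra.
set a := _ ^+ k; lra.
Qed.

Lemma gam_at {R : realType} {T : normedModType R} (x : nat -> T) n :
  gam x ((2^-1)^+n) = x n.
Proof.
have hn : (n < Nt (((2:R)^-1)^+n))%N.
  rewrite /Nt ltnS truncn_ge_nat; last by rewrite divr_ge0 // exprn_ge0.
  rewrite exprVn invrK.
  apply: le_trans (ltW (pow2_gt_nat n)) _.
  have : (1:R) <= 2^+n by apply: exprn_ege1; lra.
  set a := _ ^+ n; lra.
rewrite /gam (big_cat_nat (leq0n n) (ltnW hn)) /= (big_ltn hn) /=.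
rewrite big_nat_cond big1; last first.
  move=> i /andP [/andP [_ hi] _].
  by rewrite /term bump_small ?scale0r // pow_mul_lt.
rewrite big_nat_cond big1; last first.
  move=> i /andP [/andP [hi _] _].
  by rewrite /term bump_big ?scale0r //; exact: (@pow_mul_gt R i n hi).
rewrite /term -exprMn mulfV // expr1n bump1 scale1r add0r addr0 //.
Qed.

Lemma dir2 (R : realType)
  (G : topologicalType) (mul : G -> G -> G) (inv : G -> G) (e : G)
  (hG : topological_group mul inv e)
  (E : topologicalType) (I : set E)
  (act : E -> G -> E) (hact : continuous_right_action mul e act)
  (hactI : forall J g, I J -> I (act J g))
  (J0 : E) (hJ0 : I J0)
  (T : completeNormedModType R)
  (V : set T) (W : set G) (phi : T -> G)
  (hVo : open V) (hV0 : V 0)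
  (hphi0 : phi 0 = e)
  (hphi_cont : {within V, continuous phi})
  (U : set E) (hUo : open U) (hUJ0 : U J0)
  (Eperp : set T) (hE0 : Eperp 0)
  (K : set E) (hJ0K : K J0)
  (Psi : E -> T * E)
  (hPsi_into : forall J, (U `&` I) J -> (Eperp `&` V) (Psi J).1 /\ K (Psi J).2)
  (hPhiPsi : forall J, (U `&` I) J -> act (Psi J).2 (phi (Psi J).1) = J)
  (hPsiPhi : forall xi J, (Eperp `&` V) xi -> K J -> Psi (act J (phi xi)) = (xi, J))
  (hPsi_cont : {within U `&` I, continuous Psi}) :
  MC2 e act W K J0 -> MC1 R e act (U `&` I) (fun J => (Psi J).2) J0.
Proof.
case: hG => hass hid hinv hmulc hinvc.
case: hact => hact1 hactM hactc.
move=> [W' [W'o W'e W'W hW']] eps c eps0 c0 hc.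
have inve : inv e = e by have [+ _] := hinv e; rewrite (proj2 (hid _)).
have hPsiJ0 : Psi J0 = (0, J0).
  by rewrite -{1}(hact1 J0) -hphi0 hPsiPhi.
set F := within `[0, eps[ (nbhs (0:R)).
have FF : Filter F by exact: within_filter.
have hc0 : c @ F --> e.
  rewrite -c0; move/subspace_continuousP: hc; apply.
  by rewrite /= in_itv /= lexx eps0.
pose J t := act J0 (c t).
have hJ : J @ F --> J0.
  rewrite -{1}(hact1 J0).
  apply: (@continuous2_cvg _ _ _ _ _ _ _ _ act) => //.
    exact: (hactc (J0, e)).
  exact: cvg_cst.
have evUI : \forall t \near F, (U `&` I) (J t).
  have : \forall t \near F, U (J t) by apply: hJ; exact: open_nbhs_nbhs.
  by apply: filterS => t Ut; split => //; apply: hactI.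
have hJw : J @ F --> within (U `&` I) (nbhs J0).
  move=> P /= hP; apply: filterS2 (hJ _ hP) evUI => t /= h1 h2; exact: h1.
have hPs : (fun t => Psi (J t)) @ F --> (0 : T, J0).
  rewrite -hPsiJ0; apply: cvg_comp hJw _.
  by move/subspace_continuousP: hPsi_cont; apply.
have hxi : (fun t => (Psi (J t)).1) @ F --> (0 : T).
  have := cvg_comp _ _ hPs (@cvg_fst _ _ _ _ _).
  exact.
have phic0 : {for 0, continuous phi}.
  by move: hphi_cont; rewrite continuous_open_subspace // => /(_ 0); apply; rewrite inE.
have hphixi : (fun t => phi (Psi (J t)).1) @ F --> e.
  rewrite -hphi0; exact: cvg_comp hxi phic0.
have hg : (fun t => mul (c t) (inv (phi (Psi (J t)).1))) @ F --> e.
  have -> : e = mul e (inv e) by rewrite inve (proj1 (hid _)).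
  apply: (@continuous2_cvg _ _ _ _ _ _ _ _ mul) => //.
    exact: (hmulc (e, inv e)).
  exact: cvg_comp hphixi (hinvc e).
have evW' : \forall t \near F, W' (mul (c t) (inv (phi (Psi (J t)).1))).
  by apply: hg; exact: open_nbhs_nbhs.
have ev : \forall t \near F, (U `&` I) (J t) /\ (Psi (J t)).2 = J0.
  apply: filterS2 evUI evW' => t hUI hW; split => //.
  have [_ hK] := hPsi_into _ hUI.
  have eq1 : act J0 (mul (c t) (inv (phi (Psi (J t)).1))) = (Psi (J t)).2.
    rewrite -hactM -/(J t).
    rewrite -{1}(hPhiPsi _ hUI) hactM.
    by rewrite (proj2 (hinv _)) hact1.
  by rewrite -eq1; apply: hW' => //; rewrite eq1.
move: ev; rewrite /F /within /= => /nbhs_ballP [d /= d0 hd].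
exists (Num.min d eps); first by split; rewrite ?lt_min ?d0 ?eps0 // ge_min lexx orbT.
move=> t /andP [t0 td].
apply: hd.
  rewrite /ball /= sub0r normrN ger0_norm //.
  by apply: lt_le_trans td _; rewrite ge_min lexx.
rewrite /= in_itv /= t0 /=.
by apply: lt_le_trans td _; rewrite ge_min lexx orbT.
Qed.

Lemma dir1 (R : realType)
  (G : topologicalType) (e : G)
  (E : topologicalType) (I : set E)
  (act : E -> G -> E) (hact1 : forall J, act J e = J)
  (J0 : E)
  (T : completeNormedModType R)
  (V : set T) (W : set G) (phi : T -> G)
  (hVo : open V) (hV0 : V 0) (hWo : open W) (hWe : W e)
  (hphi0 : phi 0 = e)
  (hphi_cont : {within V, continuous phi})
  (phiinv : G -> T)
  (hphiinv : forall g, W g -> V (phiinv g) /\ phi (phiinv g) = g)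
  (hphiinv' : forall xi, V xi -> phiinv (phi xi) = xi)
  (hphiinv_cont : {within W, continuous phiinv})
  (U : set E) (Eperp : set T) (hE0 : Eperp 0)
  (K : set E)
  (Psi : E -> T * E)
  (hPsiPhi : forall xi J, (Eperp `&` V) xi -> K J -> Psi (act J (phi xi)) = (xi, J)) :
  MC1 R e act (U `&` I) (fun J => (Psi J).2) J0 -> MC2 e act W K J0.
Proof.
move=> hMC1; apply: contrapT => nMC2.
have [r r0 hr] : exists2 r : R, 0 < r & forall y : T, `|y| < r -> V y.
  have : \forall y \near (0:T), V y by apply: open_nbhs_nbhs.
  move=> /nbhs_norm0P [r /= r0 hr]; exists r => // y hy; exact: hr.
pose rho := r / 4.
have rho0 : 0 < rho by rewrite /rho; lra.
pose Wn n := W `&` phiinv @^-1` ball (0:T) (rho * ((2^-1)^+n)^+2).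
have phiinve : phiinv e = 0 by rewrite -hphi0 hphiinv'.
have hcin : {in W, continuous phiinv} by rewrite -continuous_open_subspace.
have hbad : forall n, exists g, Wn n g /\ K (act J0 g) /\ act J0 g <> J0.
  move=> n; apply: contrapT => hno; apply: nMC2; exists (Wn n); split.
  - exact: (proj1 (continuous_inP _ hWo) hcin _ (ball_open _ _)).
  - split => //=; rewrite phiinve; apply: ballxx.
    by rewrite mulr_gt0 // exprn_gt0 // exprn_gt0.
  - by move=> g [].
  - move=> g hg hK; apply: contrapT => hne; apply: hno; exists g; tauto.
have [gs hgs] := choice hbad.
pose xs n := phiinv (gs n).
have hxs : forall n, `|xs n| <= rho * ((2^-1)^+n)^+2.
  move=> n; have [[_ hb] _] := hgs n.
  by move: hb; rewrite -ball_normE /ball_ /= sub0r normrN => /ltW.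
have hxsphi : forall n, phi (xs n) = gs n.
  by move=> n; have [[hw _] _] := hgs n; exact: (proj2 (hphiinv _ hw)).
pose c t := phi (gam xs t).
have gamV : forall t, V (gam xs t).
  move=> t; apply: hr; apply: le_lt_trans (@gam_norm1 _ _ xs rho (ltW rho0) hxs t) _.
  rewrite /rho; lra.
have hpin : {in V, continuous phi} by rewrite -continuous_open_subspace.
have hc : {within `[0, 1[, continuous c}.
  apply: continuous_in_subspaceT => t; rewrite inE /= in_itv /= => /andP [t0 _].
  rewrite /continuous_at /c; exact: (cvg_comp _ _ (@gam_cont _ _ xs rho (ltW rho0) hxs t t0) (hpin _ (mem_set (gamV t)))).
have c0 : c 0 = e by rewrite /c (@gam0 _ _ xs rho (ltW rho0) hxs).
have [delta [d0 d1] hd] := hMC1 1 c ltr01 c0 hc.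
pose n := (Num.truncn (delta^-1)).+1.
have hn : ((2:R)^-1)^+n < delta.
  have h1 : delta^-1 < n%:R by exact: truncnS_gt.
  have h2 := pow2_gt_nat (R := R) n.
  rewrite exprVn invf_plt ?posrE ?exprn_gt0 //.
  exact: lt_trans h1 h2.
have ht : (0:R) <= (2^-1)^+n < delta.
  by rewrite hn andbT exprn_ge0 //; lra.
have [_ hX] := hd ((2^-1)^+n) ht.
have [_ [hK hne]] := hgs n.
move: hX; rewrite /c gam_at hxsphi.
have := hPsiPhi 0 (act J0 (gs n)) (conj hE0 hV0) hK.
rewrite hphi0 hact1 => -> /= heq; exact: hne heq.
Qed.

Theorem mainTheorem2
  (R : realType)
  (G : topologicalType) (mul : G -> G -> G) (inv : G -> G) (e : G)
  (hG : topological_group mul inv e) (hGcount : @second_countable G)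
  (E : topologicalType) (I : set E) (hI : closed I)
  (act : E -> G -> E) (hact : continuous_right_action mul e act)
  (hactI : forall J g, I J -> I (act J g))
  (J0 : E) (hJ0 : I J0)
  (T : completeNormedModType R)
  (V : set T) (W : set G) (phi : T -> G)
  (hV : [/\ open V, connected V & V 0])
  (hW : [/\ open W, connected W & W e])
  (hphi0 : phi 0 = e)
  (hphiVW : forall xi, V xi -> W (phi xi))
  (hphi_cont : {within V, continuous phi})
  (phiinv : G -> T)
  (hphiinv : forall g, W g -> V (phiinv g) /\ phi (phiinv g) = g)
  (hphiinv' : forall xi, V xi -> phiinv (phi xi) = xi)
  (hphiinv_cont : {within W, continuous phiinv})
  (U : set E) (hU : [/\ open U, connected U & U J0])
  (Eperp : set T) (hEperp : linear_subspace Eperp) (hEperpc : closed Eperp)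
  (K : set E) (hK : K `<=` U `&` I) (hJ0K : K J0)
  (Psi : E -> T * E)
  (hPsi_into : forall J, (U `&` I) J -> (Eperp `&` V) (Psi J).1 /\ K (Psi J).2)
  (hPhiPsi : forall J, (U `&` I) J -> act (Psi J).2 (phi (Psi J).1) = J)
  (hPsiPhi : forall xi J, (Eperp `&` V) xi -> K J -> Psi (act J (phi xi)) = (xi, J))
  (hPhi_into : forall xi J, (Eperp `&` V) xi -> K J -> (U `&` I) (act J (phi xi)))
  (hPhi_cont : {within (Eperp `&` V) `*` K,
                 continuous (fun p : T * E => act p.2 (phi p.1))})
  (hPsi_cont : {within U `&` I, continuous Psi}) :
  MC1 R e act (U `&` I) (fun J => (Psi J).2) J0 <-> MC2 e act W K J0.
Proof.
case: hV => hVo _ hV0; case: hW => hWo _ hWe; case: hU => hUo _ hUJ0.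
have hE0 : Eperp 0 by case: hEperp.
have hact1 : forall J, act J e = J by case: hact.
split.
- exact: (@dir1 R G e E I act hact1 J0 T V W phi hVo hV0 hWo hWe hphi0 hphi_cont
    phiinv hphiinv hphiinv' hphiinv_cont U Eperp hE0 K Psi hPsiPhi).
- exact: (@dir2 R G mul inv e hG E I act hact hactI J0 hJ0 T V W phi hVo hV0 hphi0
    hphi_cont U hUo hUJ0 Eperp hE0 K hJ0K Psi hPsi_into hPhiPsi hPsiPhi hPsi_cont).
Qed.
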